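(* Let $q=q(h)$ be a function of $h$ with values in $[0,1]$, and let $\Sigma$ be a random fan chosen with respect to $T(h,1-q)$. Then: (1) If $q\prec 1/h^2$ or $1-q\prec 1/h^2$, then with high probability $X(\Sigma)$ is smooth. (2) If $q\succ 1/h^2$ and $1-q\succ 1/h^2$, then with high probability $X(\Sigma)$ is singular. (3) Moreover, for every integer $k>1$: if $1-q\succ 1/h$ and $q\succ 1/h^2$, then with high probability $X(\Sigma)$ has a singularity of index at least $k$, i.e. $\Sigma$ has a $2$-dimensional cone of singularity index at least $k$.
   Context: A ray is a half-line $\rho=\mathbb{R}_{\ge 0}v\subset\mathbb{R}^2$ with $v\in\mathbb{Z}^2\setminus\{0\}$; $u_\rho$ denotes the primitive lattice generator of $\rho$ (the nonzero lattice point on $\rho$ closest to $0$). On $\mathbb{Z}^2$ use the norm $|(x,y)|=\max\{|x|,|y|\}$, and write $|\rho|=|u_\rho|$. Given a finite set $S$ of rays, its completion is the fan $\Sigma$ with $\Sigma(1)=S$ that is maximal with respect to inclusion among all fans (collections of strongly convex rational polyhedral cones closed under faces and meeting in common faces) with set of rays $S$; concretely its $2$-dimensional cones are the cones spanned by pairs of angularly consecutive rays of $S$ whose angle is less than $\pi$. For $h\ge 1$ and $p\in[0,1]$, the distribution $T(h,p)$ on fans is obtained by including each ray $\rho$ with $|\rho|\le h$ independently with probability $p$ and taking the completion of the chosen set of rays. $X(\Sigma)$ denotes the normal toric surface of the fan $\Sigma$. The singularity index of a $2$-dimensional cone spanned by rays $\rho,\tau$ is $|\det(u_\rho,u_\tau)|$;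 $X(\Sigma)$ is smooth iff every $2$-dimensional cone of $\Sigma$ has index $1$, and ''$X(\Sigma)$ has a singularity of index at least $k$'' means some $2$-dimensional cone has index $\ge k$. For functions $f,g$ of $h$, $f\prec g$ means $\lim_{h\to\infty}f(h)/g(h)=0$, and $f\succ g$ means $g\prec f$. A property holds with high probability if its probability tends to $1$ as $h\to\infty$. *)

(* Defs.v *)
From Stdlib Require Import Reals ZArith List Classical ClassicalEpsilon.
Import ListNotations.
Open Scope R_scope.

Definition pt := (Z * Z)%type.

Definition det (u v : pt) : Z := (fst u * snd v - snd u * fst v)%Z.

Definition zrange (h : nat) : list Z :=
  map (fun i => (Z.of_nat i - Z.of_nat h)%Z) (seq 0 (2 * h + 1)).

(* Rays rho with |rho| <= h, represented by their primitive generators u_rho: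
   lattice points (x,y) with max(|x|,|y|) <= h and gcd(x,y) = 1. *)
Definition rays_upto (h : nat) : list pt :=
  filter (fun u : pt => Z.eqb (Z.gcd (fst u) (snd u)) 1)
    (flat_map (fun x => map (fun y => (x, y)) (zrange h)) (zrange h)).

(* All sub-lists (= subsets, since rays_upto has no duplicates) *)
Fixpoint sublists {A : Type} (l : list A) : list (list A) :=
  match l with
  | [] => [[]]
  | x :: l' => map (cons x) (sublists l') ++ sublists l'
  end.

(* 2-dimensional cones of the completion of the set of rays S (given by
   primitive generators): (u,v) spans a 2-dim cone iff v is the angularly
   next ray after u (counterclockwise) and the angle from u to v is < pi,
   i.e. det(u,v) > 0 and no ray of S lies strictly between u and v. *)
Definition cone2 (S : list pt) (u v : pt) : Prop :=
  In u S /\ In v S /\ (det u v > 0)%Z /\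
  forall w, In w S -> ~ ((det u w > 0)%Z /\ (det w v > 0)%Z).

Definition sing_index (u v : pt) : Z := Z.abs (det u v).

Definition smooth (S : list pt) : Prop :=
  forall u v, cone2 S u v -> sing_index u v = 1%Z.

Definition has_sing_ge (k : Z) (S : list pt) : Prop :=
  exists u v, cone2 S u v /\ (sing_index u v >= k)%Z.

Definition indicator (P : Prop) : R :=
  if excluded_middle_informative P then 1 else 0.

(* Probability of event E under T(h,p): each ray with |rho| <= h included
   independently with probability p. *)
Definition probT (h : nat) (p : R) (E : list pt -> Prop) : R :=
  let N := length (rays_upto h) in
  fold_right Rplus 0
    (map (fun S => p ^ length S * (1 - p) ^ (N - length S) * indicator (E S))
         (sublists (rays_upto h))).

(* f < g  (f prec g): lim f(h)/g(h) = 0 (g eventually nonzero so the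
   quotient is defined). *)
Definition prec (f g : nat -> R) : Prop :=
  (exists N, forall n, (n >= N)%nat -> g n <> 0) /\
  Un_cv (fun n => f n / g n) 0.

Definition succ (f g : nat -> R) : Prop := prec g f.

Definition inv_sq (h : nat) : R := 1 / (INR h ^ 2).
Definition inv_lin (h : nat) : R := 1 / INR h.

Definition whp (q : nat -> R) (E : list pt -> Prop) : Prop :=
  Un_cv (fun h => probT h (1 - q h) E) 1.

(* Main.v *)
Require Import Defs.
From Stdlib Require Import Bool Reals ZArith List Lia Lra Znumtheory Classical ClassicalEpsilon Arith.
Import ListNotations.

Open Scope R_scope.

Definition mu (l : list pt) (p : R) (E : list pt -> Prop) : R :=
  fold_right Rplus 0
    (map (fun S => p ^ length S * (1 - p) ^ (length l - length S) * indicator (E S))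
         (sublists l)).

Lemma probT_mu h p E : probT h p E = mu (rays_upto h) p E.
Proof. reflexivity. Qed.

Definition sumf (f : list pt -> R) (L : list (list pt)) : R :=
  fold_right (fun S acc => f S + acc) 0 L.

Lemma fold_map_sumf f L : fold_right Rplus 0 (map f L) = sumf f L.
Proof. induction L; simpl; auto. rewrite IHL; auto. Qed.

Lemma sumf_app f A B : sumf f (A ++ B) = sumf f A + sumf f B.
Proof. induction A; simpl. lra. rewrite IHA; lra. Qed.

Lemma sumf_map f g A : sumf f (map g A) = sumf (fun x => f (g x)) A.
Proof. induction A; simpl; auto. rewrite IHA; auto. Qed.

Lemma sumf_ext_in f g A : (forall x, In x A -> f x = g x) -> sumf f A = sumf g A.
Proof. induction A; simpl; intros; auto. rewrite H, IHA; auto. Qed.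

Lemma sumf_scal c f A : sumf (fun x => c * f x) A = c * sumf f A.
Proof. induction A; simpl. lra. rewrite IHA; lra. Qed.

Lemma sublists_len (l : list pt) S : In S (sublists l) -> (length S <= length l)%nat.
Proof.
  revert S; induction l; simpl; intros S H.
  - destruct H as [<-|[]]; simpl; lia.
  - apply in_app_or in H as [H|H].
    + apply in_map_iff in H as [S' [<- HS']]. simpl. specialize (IHl _ HS'); lia.
    + specialize (IHl _ H); lia.
Qed.

Lemma sublists_incl (l : list pt) S : In S (sublists l) -> incl S l.
Proof.
  revert S; induction l; simpl; intros S H.
  - destruct H as [<-|[]]; intros x [].
  - apply in_app_or in H as [H|H].
    + apply in_map_iff in H as [S' [<- HS']]. specialize (IHl _ HS').
      intros y [<-|Hy]; [left; auto| right; auto].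
    + specialize (IHl _ H). intros y Hy; right; auto.
Qed.

Lemma mu_nil p E : mu [] p E = indicator (E []).
Proof. unfold mu; simpl. lra. Qed.

Lemma mu_cons x l p E :
  mu (x :: l) p E = p * mu l p (fun S => E (x :: S)) + (1 - p) * mu l p E.
Proof.
  unfold mu. rewrite !fold_map_sumf. simpl sublists.
  rewrite sumf_app, sumf_map. simpl length.
  rewrite <- !sumf_scal. f_equal.
  - apply sumf_ext_in; intros S HS. simpl. ring.
  - apply sumf_ext_in; intros T HS. apply sublists_len in HS.
    replace (Datatypes.S (length l) - length T)%nat with (Datatypes.S (length l - length T)) by lia.
    simpl. ring.
Qed.

Open Scope R_scope.

Lemma ind_T (P : Prop) : P -> indicator P = 1.
Proof. unfold indicator; destruct excluded_middle_informative; tauto. Qed.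
Lemma ind_F (P : Prop) : ~ P -> indicator P = 0.
Proof. unfold indicator; destruct excluded_middle_informative; tauto. Qed.
Lemma ind_iff (P Q : Prop) : (P <-> Q) -> indicator P = indicator Q.
Proof. intros H; destruct (classic P). rewrite !ind_T; tauto. rewrite !ind_F; tauto. Qed.

Lemma incl_cons_both (x : pt) S l : incl S l -> incl (x :: S) (x :: l).
Proof. intros H y [<-|Hy]; [left|right; apply H]; auto. Qed.
Lemma incl_cons_r (x : pt) S l : incl S l -> incl S (x :: l).
Proof. intros H y Hy; right; auto. Qed.

Lemma mu_ext l p E F : (forall S, incl S l -> (E S <-> F S)) -> mu l p E = mu l p F.
Proof.
  revert E F; induction l as [|x l IH]; intros E F H.
  - rewrite !mu_nil. apply ind_iff, H. intros y [].
  - rewrite !mu_cons. f_equal; [f_equal|f_equal]; apply IH; intros S HS.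
    + apply H, incl_cons_both; auto.
    + apply H, incl_cons_r; auto.
Qed.

Lemma mu_mono l p E F : 0 <= p <= 1 ->
  (forall S, incl S l -> E S -> F S) -> mu l p E <= mu l p F.
Proof.
  intros Hp; revert E F; induction l as [|x l IH]; intros E F H.
  - rewrite !mu_nil. destruct (classic (E [])).
    + rewrite !ind_T; auto. lra. apply H; auto. intros y [].
    + rewrite (ind_F _ H0). unfold indicator; destruct excluded_middle_informative; lra.
  - rewrite !mu_cons.
    assert (mu l p (fun S => E (x :: S)) <= mu l p (fun S => F (x :: S))).
    { apply IH; intros S HS; apply H, incl_cons_both; auto. }
    assert (mu l p E <= mu l p F).
    { apply IH; intros S HS; apply H, incl_cons_r; auto. }
    nra.
Qed.

Lemma mu_true l p : mu l p (fun _ => True) = 1.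
Proof.
  induction l as [|x l IH].
  - rewrite mu_nil, ind_T; auto.
  - rewrite mu_cons, IH. ring.
Qed.

Lemma mu_add l p E F : mu l p (fun S => E S /\ F S) + mu l p (fun S => E S /\ ~ F S) = mu l p E.
Proof.
  revert E F; induction l as [|x l IH]; intros E F.
  - rewrite !mu_nil. destruct (classic (E [])); destruct (classic (F [])).
    + rewrite (ind_T (E [] /\ F [])), (ind_F (E [] /\ ~ F [])), ind_T; tauto || lra.
    + rewrite (ind_F (E [] /\ F [])), (ind_T (E [] /\ ~ F [])), ind_T; tauto || lra.
    + rewrite (ind_F (E [] /\ F [])), (ind_F (E [] /\ ~ F [])), ind_F; tauto || lra.
    + rewrite (ind_F (E [] /\ F [])), (ind_F (E [] /\ ~ F [])), ind_F; tauto || lra.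
  - rewrite !mu_cons.
    rewrite <- (IH (fun S => E (x :: S)) (fun S => F (x :: S))).
    rewrite <- (IH E F). ring.
Qed.

Lemma mu_compl l p E : mu l p E + mu l p (fun S => ~ E S) = 1.
Proof.
  rewrite <- (mu_true l p).
  rewrite <- (mu_add l p (fun _ => True) E).
  f_equal; apply mu_ext; intros; tauto.
Qed.

Lemma mu_nonneg l p E : 0 <= p <= 1 -> 0 <= mu l p E.
Proof.
  intros Hp. revert E; induction l as [|x l IH]; intros E.
  - rewrite mu_nil. unfold indicator; destruct excluded_middle_informative; lra.
  - rewrite mu_cons. pose proof (IH (fun S => E (x :: S))). pose proof (IH E). nra.
Qed.

Lemma mu_le1 l p E : 0 <= p <= 1 -> mu l p E <= 1.
Proof.
  intros Hp. pose proof (mu_compl l p E). pose proof (mu_nonneg l p (fun S => ~ E S) Hp). lra.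
Qed.

Definition dep (A : list pt) (E : list pt -> Prop) : Prop :=
  forall S S', (forall y, In y A -> (In y S <-> In y S')) -> (E S <-> E S').

Lemma dep_cons_notin A E x : dep A E -> ~ In x A -> forall S, E (x :: S) <-> E S.
Proof.
  intros H Hx S. apply H. intros y Hy. simpl. split; [intros [<-|?]|]; tauto.
Qed.

Lemma dep_cons A E x : dep A E -> dep A (fun S => E (x :: S)).
Proof.
  intros H S S' HS. apply H. intros y Hy. simpl. specialize (HS y Hy). tauto.
Qed.

Lemma mu_indep l p E F A B : dep A E -> dep B F ->
  (forall x, In x l -> In x A -> In x B -> False) ->
  mu l p (fun S => E S /\ F S) = mu l p E * mu l p F.
Proof.
  revert E F; induction l as [|x l IH]; intros E F HE HF Hd.
  - rewrite !mu_nil. destruct (classic (E [])); destruct (classic (F [])).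
    + rewrite !ind_T; tauto || lra.
    + rewrite (ind_F (E [] /\ F [])), (ind_F (F [])); tauto || lra.
    + rewrite (ind_F (E [] /\ F [])), (ind_F (E [])); tauto || lra.
    + rewrite (ind_F (E [] /\ F [])), (ind_F (E [])); tauto || lra.
  - assert (Hd' : forall y, In y l -> In y A -> In y B -> False)
      by (intros y Hy; apply Hd; right; auto).
    rewrite !mu_cons.
    rewrite (IH (fun S => E (x :: S)) (fun S => F (x :: S))); auto using dep_cons.
    rewrite (IH E F); auto.
    destruct (classic (In x A)) as [HA|HA].
    + assert (HB : ~ In x B) by (intro; eapply Hd; eauto; left; auto).
      rewrite (mu_ext l p (fun S => F (x :: S)) F) by (intros; apply (dep_cons_notin B); auto).
      ring.
    + rewrite (mu_ext l p (fun S => E (x :: S)) E) by (intros; apply (dep_cons_notin A); auto).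
      ring.
Qed.

Open Scope R_scope.

Lemma NoDup_app_disj {A} (a b : list A) x : NoDup (a ++ b) -> In x a -> In x b -> False.
Proof.
  induction a as [|y a IH]; simpl; intros H Ha Hb; [destruct Ha|].
  inversion H; subst. destruct Ha as [<-|Ha].
  - apply H2, in_or_app; auto.
  - apply IH; auto.
Qed.

Lemma mu_false l p : mu l p (fun _ => False) = 0.
Proof.
  pose proof (mu_compl l p (fun _ => True)). rewrite mu_true in H.
  rewrite (mu_ext l p (fun _ => False) (fun S => ~ True)); [lra|]. intros; tauto.
Qed.

Lemma mu_in l p y : NoDup l -> In y l -> mu l p (fun S => In y S) = p.
Proof.
  induction l as [|x l IH]; intros Hn Hy; [destruct Hy|].
  inversion Hn; subst. rewrite mu_cons.
  destruct (classic (y = x)) as [->|Hne].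
  - rewrite (mu_ext l p (fun S => In x (x :: S)) (fun _ => True)) by (intros; simpl; tauto).
    rewrite (mu_ext l p (fun S => In x S) (fun _ => False)).
    + rewrite mu_true, mu_false. ring.
    + intros S HS; split; [intro H; apply H1, HS; auto| tauto].
  - destruct Hy as [Hy|Hy]; [congruence|].
    rewrite (mu_ext l p (fun S => In y (x :: S)) (fun S => In y S)).
    + rewrite IH; auto. ring.
    + intros S _; simpl; split; [intros [->|?]; [congruence|auto]|auto].
Qed.

Lemma mu_notin l p y : NoDup l -> In y l -> mu l p (fun S => ~ In y S) = 1 - p.
Proof.
  intros Hn Hy. pose proof (mu_compl l p (fun S => In y S)). rewrite mu_in in H; auto. lra.
Qed.

Lemma dep_in A y : In y A -> dep A (fun S => In y S).
Proof. intros Hy S S' H. apply H; auto. Qed.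
Lemma dep_not A E : dep A E -> dep A (fun S => ~ E S).
Proof. intros H S S' HS. specialize (H S S' HS). tauto. Qed.
Lemma dep_and A E F : dep A E -> dep A F -> dep A (fun S => E S /\ F S).
Proof. intros H1 H2 S S' HS. specialize (H1 S S' HS). specialize (H2 S S' HS). tauto. Qed.
Lemma dep_mono A B E : incl A B -> dep A E -> dep B E.
Proof. intros Hi H S S' HS. apply H. intros y Hy; apply HS, Hi; auto. Qed.

Lemma dep_forall {X} (I : list X) (ev : X -> list pt -> Prop) (dp : X -> list pt) :
  (forall i, In i I -> dep (dp i) (ev i)) ->
  dep (flat_map dp I) (fun S => Forall (fun i => ev i S) I).
Proof.
  induction I as [|i I IH]; intros H S S' HS.
  - split; constructor.
  - simpl in HS. rewrite !Forall_cons_iff.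
    assert (ev i S <-> ev i S').
    { apply (H i (or_introl eq_refl)). intros y Hy; apply HS, in_or_app; auto. }
    assert (Forall (fun i => ev i S) I <-> Forall (fun i => ev i S') I).
    { apply IH. intros; apply H; right; auto. intros y Hy; apply HS, in_or_app; auto. }
    tauto.
Qed.

Lemma mu_prod {X} l p (I : list X) (ev : X -> list pt -> Prop) (dp : X -> list pt) :
  (forall i, In i I -> dep (dp i) (ev i)) ->
  NoDup (flat_map dp I) ->
  mu l p (fun S => Forall (fun i => ev i S) I) =
  fold_right Rmult 1 (map (fun i => mu l p (ev i)) I).
Proof.
  induction I as [|i I IH]; intros H Hn.
  - simpl. rewrite <- (mu_true l p). apply mu_ext; intros; split; auto.
  - simpl. simpl in Hn.
    rewrite (mu_ext l p _ (fun S => ev i S /\ Forall (fun i => ev i S) I))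
      by (intros; apply Forall_cons_iff).
    rewrite (mu_indep l p _ _ (dp i) (flat_map dp I)).
    + rewrite IH; auto. intros; apply H; right; auto. eapply NoDup_app_remove_l; eauto.
    + apply H; left; auto.
    + apply (dep_forall I ev dp). intros; apply H; right; auto.
    + intros x _ H1 H2. eapply NoDup_app_disj; eauto.
Qed.

Lemma mu_prod_const {X} l p (I : list X) (ev : X -> list pt -> Prop) (dp : X -> list pt) c :
  (forall i, In i I -> dep (dp i) (ev i)) ->
  NoDup (flat_map dp I) ->
  (forall i, In i I -> mu l p (ev i) = c) ->
  mu l p (fun S => Forall (fun i => ev i S) I) = c ^ length I.
Proof.
  intros H1 H2 H3. rewrite (mu_prod l p I ev dp); auto. clear H1 H2.
  induction I; simpl; auto. rewrite H3, IHI; auto. intros; apply H3; right; auto. left; auto.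
Qed.

Lemma mu_all_in l p R : NoDup l -> NoDup R -> incl R l ->
  mu l p (fun S => Forall (fun r => In r S) R) = p ^ length R.
Proof.
  intros. apply (mu_prod_const l p R (fun r S => In r S) (fun r => [r])).
  - intros; apply dep_in; left; auto.
  - rewrite flat_map_concat_map. replace (concat (map (fun r => [r]) R)) with R; auto.
    clear; induction R; simpl; auto. f_equal; auto.
  - intros; apply mu_in; auto.
Qed.

Lemma mu_all_out l p R : NoDup l -> NoDup R -> incl R l ->
  mu l p (fun S => Forall (fun r => ~ In r S) R) = (1 - p) ^ length R.
Proof.
  intros. apply (mu_prod_const l p R (fun r S => ~ In r S) (fun r => [r])).
  - intros; apply dep_not, dep_in; left; auto.
  - rewrite flat_map_concat_map. replace (concat (map (fun r => [r]) R)) with R; auto.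
    clear; induction R; simpl; auto. f_equal; auto.
  - intros; apply mu_notin; auto.
Qed.

Lemma mu_site3 l p a b c (ba bb bc : bool) :
  NoDup l -> In a l -> In b l -> In c l -> a <> b -> a <> c -> b <> c ->
  let lit := fun (y : pt) (bo : bool) S => if bo then In y S else ~ In y S in
  let w := fun (bo : bool) => if bo then p else 1 - p in
  mu l p (fun S => lit a ba S /\ lit b bb S /\ lit c bc S) = w ba * w bb * w bc.
Proof.
  intros Hn Ha Hb Hc Hab Hac Hbc lit w.
  assert (L : forall y bo, In y l -> dep [y] (lit y bo) /\ mu l p (lit y bo) = w bo).
  { intros y bo Hy. unfold lit, w; destruct bo; split.
    - apply dep_in; left; auto.
    - apply mu_in; auto.
    - apply dep_not, dep_in; left; auto.
    - apply mu_notin; auto. }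
  destruct (L a ba Ha) as [Da Ma]. destruct (L b bb Hb) as [Db Mb].
  destruct (L c bc Hc) as [Dc Mc].
  rewrite (mu_indep l p _ _ [a] [b; c]); auto.
  - rewrite (mu_indep l p _ _ [b] [c]); auto.
    + rewrite Ma, Mb, Mc; ring.
    + intros x _ [<-|[]] [->|[]]; auto.
  - apply dep_and; eapply dep_mono; eauto; intros x [<-|[]]; simpl; auto.
  - intros x _ [<-|[]] [->|[->|[]]]; auto.
Qed.

Open Scope Z_scope.

Lemma in_zrange h z : In z (zrange h) <-> - Z.of_nat h <= z <= Z.of_nat h.
Proof.
  unfold zrange. rewrite in_map_iff. split.
  - intros [i [<- Hi]]. apply in_seq in Hi. lia.
  - intros Hz. exists (Z.to_nat (z + Z.of_nat h)). split.
    + rewrite Z2Nat.id; lia.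
    + apply in_seq. lia.
Qed.

Lemma in_rays h x y : In (x, y) (rays_upto h) <->
  (- Z.of_nat h <= x <= Z.of_nat h /\ - Z.of_nat h <= y <= Z.of_nat h /\ Z.gcd x y = 1).
Proof.
  unfold rays_upto. rewrite filter_In, in_flat_map. simpl.
  rewrite Z.eqb_eq. split.
  - intros [[x' [Hx Hm]] Hg]. apply in_map_iff in Hm as [y' [E Hy]]. inversion E; subst.
    rewrite in_zrange in Hx, Hy. tauto.
  - intros [Hx [Hy Hg]]. split; auto. exists x. split. apply in_zrange; auto.
    apply in_map_iff. exists y. split; auto. apply in_zrange; auto.
Qed.

Lemma NoDup_map_inj {A B} (f : A -> B) l : (forall x y, f x = f y -> x = y) -> NoDup l -> NoDup (map f l).
Proof. intros Hf Hl. apply NoDup_map_NoDup_ForallPairs; auto. intros x y _ _; apply Hf. Qed.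

Lemma NoDup_zrange h : NoDup (zrange h).
Proof.
  unfold zrange. apply NoDup_map_inj; [|apply seq_NoDup].
  intros a b E. lia.
Qed.

Lemma NoDup_pairs (X Y : list Z) : NoDup X -> NoDup Y ->
  NoDup (flat_map (fun x => map (fun y => (x, y)) Y) X).
Proof.
  induction X as [|x X IH]; simpl; intros HX HY; [constructor|].
  inversion HX; subst. apply NoDup_app.
  - apply NoDup_map_inj; auto. intros a b E; inversion E; auto.
  - apply IH; auto.
  - intros [a b] Ha Hb. apply in_map_iff in Ha as [y [E _]]. inversion E; subst.
    apply in_flat_map in Hb as [x' [Hx' Hm]]. apply in_map_iff in Hm as [y' [E' _]].
    inversion E'; subst. auto.
Qed.

Lemma NoDup_rays h : NoDup (rays_upto h).
Proof. unfold rays_upto. apply NoDup_filter, NoDup_pairs; apply NoDup_zrange. Qed.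

Lemma det_gcd1 (u z : pt) : det u z = 1 -> Z.gcd (fst z) (snd z) = 1.
Proof.
  destruct u as [u1 u2], z as [z1 z2]; unfold det; simpl; intros H.
  assert (Hd : (Z.gcd z1 z2 | 1)).
  { rewrite <- H. apply Z.divide_sub_r.
    - apply Z.divide_mul_r, Z.gcd_divide_r.
    - apply Z.divide_mul_r, Z.gcd_divide_l. }
  apply Z.divide_1_r in Hd. pose proof (Z.gcd_nonneg z1 z2). lia.
Qed.

Lemma cramer1 u1 u2 w1 w2 z1 z2 :
  det (u1,u2) (w1,w2) * z1 = det (z1,z2) (w1,w2) * u1 + det (u1,u2) (z1,z2) * w1.
Proof. unfold det; simpl; ring. Qed.
Lemma cramer2 u1 u2 w1 w2 z1 z2 :
  det (u1,u2) (w1,w2) * z2 = det (z1,z2) (w1,w2) * u2 + det (u1,u2) (z1,z2) * w2.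
Proof. unfold det; simpl; ring. Qed.

(* nothing strictly between u and w when u+w leaves the box *)
Lemma no_between u1 u2 w1 w2 z1 z2 H :
  det (u1,u2) (w1,w2) = 1 -> 0 <= u1 -> 0 <= w1 -> u1 + w1 > H -> z1 <= H ->
  det (u1,u2) (z1,z2) > 0 -> det (z1,z2) (w1,w2) > 0 -> False.
Proof.
  intros Hd Hu Hw Hs Hz Ha Hb.
  pose proof (cramer1 u1 u2 w1 w2 z1 z2) as C. rewrite Hd in C.
  set (a := det (z1,z2) (w1,w2)) in *. set (b := det (u1,u2) (z1,z2)) in *.
  nia.
Qed.

Lemma full_smooth h u v : In u (rays_upto h) -> In v (rays_upto h) -> det u v > 0 ->
  (forall z, In z (rays_upto h) -> ~ (det u z > 0 /\ det z v > 0)) -> det u v = 1.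
Proof.
  destruct u as [u1 u2], v as [v1 v2]. rewrite !in_rays.
  intros [Hu1 [Hu2 Hgu]] [Hv1 [Hv2 Hgv]] Hd Hno.
  set (H := Z.of_nat h) in *.
  destruct (Z.gcd_bezout _ _ _ Hgu) as [a [b Hab]].
  set (d := det (u1,u2) (v1,v2)) in *.
  set (c0 := det (-b, a) (v1,v2)).
  set (s := - (c0 / d)).
  set (w1 := -b + s * u1). set (w2 := a + s * u2).
  assert (Hw : det (u1,u2) (w1,w2) = 1) by (unfold det, w1, w2 in *; simpl in *; nia).
  set (r := det (w1,w2) (v1,v2)).
  assert (Hr : r = c0 mod d).
  { rewrite (Z.mod_eq c0 d) by lia. unfold r, w1, w2, s, c0, d, det; simpl. ring. }
  pose proof (Z.mod_pos_bound c0 d ltac:(lia)) as Hrb. rewrite <- Hr in Hrb.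
  pose proof (cramer1 u1 u2 w1 w2 v1 v2) as C1. pose proof (cramer2 u1 u2 w1 w2 v1 v2) as C2.
  rewrite Hw in C1, C2. fold d in C1, C2.
  assert (E1 : det (v1,v2) (w1,w2) = - r) by (unfold r, det; simpl; ring).
  rewrite E1 in C1, C2.
  destruct (Z.eq_dec r 0) as [Hr0|Hr0].
  - rewrite Hr0 in C1, C2.
    assert (Hdd : (d | Z.gcd v1 v2)).
    { apply Z.gcd_greatest; [exists w1|exists w2]; lia. }
    rewrite Hgv in Hdd. apply Z.divide_1_r in Hdd. lia.
  - destruct (Z.eq_dec d 1) as [|Hd1]; auto. exfalso.
    pose proof (cramer1 u1 u2 v1 v2 w1 w2) as D1. pose proof (cramer2 u1 u2 v1 v2 w1 w2) as D2.
    fold d r in D1, D2. rewrite Hw in D1, D2.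
    apply (Hno (w1, w2)).
    + apply in_rays. split; [|split].
      * nia.
      * nia.
      * apply (det_gcd1 (u1,u2) (w1,w2)); auto.
    + fold r. lia.
Qed.

Open Scope Z_scope.

Lemma plucker u x y m : det u x * det y m = det u y * det x m + det u m * det y x.
Proof. destruct u, x, y, m; unfold det; simpl; ring. Qed.

Lemma min_exists (u : pt) (T : list pt) : (exists v, In v T /\ det u v > 0) ->
  exists m, In m T /\ det u m > 0 /\ forall w, In w T -> ~ (det u w > 0 /\ det w m > 0).
Proof.
  induction T as [|x T IH]; intros [v [Hv Hd]]; [destruct Hv|].
  assert (Hxx : det x x = 0) by (destruct x; unfold det; simpl; ring).
  destruct (classic (exists v, In v T /\ det u v > 0)) as [HT|HT].
  - destruct (IH HT) as [m [Hm [Hum Hmin]]].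
    destruct (classic (det u x > 0 /\ det x m > 0)) as [Hx|Hx].
    + exists x. split; [left; auto|]. split; [tauto|].
      intros w [<-|Hw] [H1 H2]; [lia|].
      apply (Hmin w Hw). split; auto.
      pose proof (plucker u x w m). nia.
    + exists m. split; [right; auto|]. split; auto.
      intros w [<-|Hw]; auto.
  - exists x. destruct Hv as [<-|Hv]; [|exfalso; apply HT; eauto].
    split; [left; auto|]. split; auto.
    intros w [<-|Hw] [H1 H2]; [lia|]. apply HT; eauto.
Qed.

Lemma cone_exists S u : In u S -> (exists v, In v S /\ det u v > 0) ->
  exists m, cone2 S u m.
Proof.
  intros Hu Hv. destruct (min_exists u S Hv) as [m [Hm [Hd Hmin]]].
  exists m. repeat split; auto.
Qed.

Lemma det_gcd1' (u z : pt) : det z u = 1 -> Z.gcd (fst z) (snd z) = 1.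
Proof.
  destruct u as [u1 u2], z as [z1 z2]; unfold det; simpl; intros H.
  assert (Hd : (Z.gcd z1 z2 | 1)).
  { rewrite <- H. apply Z.divide_sub_r.
    - apply Z.divide_mul_l, Z.gcd_divide_l.
    - apply Z.divide_mul_l, Z.gcd_divide_r. }
  apply Z.divide_1_r in Hd. pose proof (Z.gcd_nonneg z1 z2). lia.
Qed.

Definition Wspec (H K : Z) (w : pt) : Prop :=
  1 <= snd w < fst w /\ K * fst w <= H /\ Z.gcd (fst w) (snd w) = 1.

Definition uvec (H : Z) (w : pt) : pt :=
  epsilon (inhabits ((0,0) : pt)) (fun u => det u w = 1 /\ H - fst w < fst u <= H).
Definition vvec (H : Z) (w : pt) : pt :=
  epsilon (inhabits ((0,0) : pt)) (fun v => det w v = 1 /\ H - fst w < fst v <= H).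

Lemma uvec_spec H K w : Wspec H K w ->
  det (uvec H w) w = 1 /\ H - fst w < fst (uvec H w) <= H.
Proof.
  destruct w as [a b]; unfold Wspec; simpl. intros [Hb [HK Hg]].
  unfold uvec; apply epsilon_spec.
  destruct (Z.gcd_bezout _ _ _ Hg) as [x [y Hxy]].
  set (t := (H - y) / a).
  exists (y + t * a, - x + t * b). unfold det; simpl. split; [nia|].
  pose proof (Z.mod_pos_bound (H - y) a ltac:(lia)).
  pose proof (Z.div_mod (H - y) a ltac:(lia)). fold t in H1. lia.
Qed.

Lemma vvec_spec H K w : Wspec H K w ->
  det w (vvec H w) = 1 /\ H - fst w < fst (vvec H w) <= H.
Proof.
  destruct w as [a b]; unfold Wspec; simpl. intros [Hb [HK Hg]].
  unfold vvec; apply epsilon_spec.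
  destruct (Z.gcd_bezout _ _ _ Hg) as [x [y Hxy]].
  set (t := (H + y) / a).
  exists (- y + t * a, x + t * b). unfold det; simpl. split; [nia|].
  pose proof (Z.mod_pos_bound (H + y) a ltac:(lia)).
  pose proof (Z.div_mod (H + y) a ltac:(lia)). fold t in H1. lia.
Qed.

Open Scope Z_scope.

Lemma u_facts H K a b : 3 <= K -> Wspec H K (a, b) ->
  exists u1 u2, uvec H (a,b) = (u1, u2) /\ u1 * b - u2 * a = 1 /\
   H - a < u1 <= H /\ 0 <= u2 < u1.
Proof.
  intros HK Hs. pose proof (uvec_spec H K _ Hs) as [Hd Hb].
  destruct (uvec H (a,b)) as [u1 u2] eqn:E. exists u1, u2. unfold Wspec, det in *; simpl in *.
  split; auto. split; [lia|]. split; [lia|].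
  assert (u1 >= 1) by nia. assert (u1 * b >= u1) by nia. assert (u1 * b <= u1 * (a - 1)) by nia.
  split; nia.
Qed.

Lemma v_facts H K a b : 3 <= K -> Wspec H K (a, b) ->
  exists v1 v2, vvec H (a,b) = (v1, v2) /\ a * v2 - b * v1 = 1 /\
   H - a < v1 <= H /\ 0 < v2 <= v1.
Proof.
  intros HK Hs. pose proof (vvec_spec H K _ Hs) as [Hd Hb].
  destruct (vvec H (a,b)) as [v1 v2] eqn:E. exists v1, v2. unfold Wspec, det in *; simpl in *.
  split; auto. split; [lia|]. split; [lia|].
  assert (v1 >= 2) by nia. assert (b * v1 <= (a - 1) * v1) by nia. 
  split; nia.
Qed.

Lemma in_rays' h (z : pt) : In z (rays_upto h) <->
  (- Z.of_nat h <= fst z <= Z.of_nat h /\ - Z.of_nat h <= snd z <= Z.of_nat h /\ Z.gcd (fst z) (snd z) = 1).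
Proof. destruct z; apply in_rays. Qed.

Lemma prim_mult c a b : Z.gcd (c * a) (c * b) = 1 -> c > 0 -> c = 1.
Proof.
  intros Hg Hc. assert (Hd : (c | Z.gcd (c*a) (c*b))).
  { apply Z.gcd_greatest; apply Z.divide_factor_l. }
  rewrite Hg in Hd. apply Z.divide_1_r in Hd. lia.
Qed.

Section Sites.
Variable h : nat.
Let H := Z.of_nat h.
Variable K : Z.
Hypothesis HK : 3 <= K.

Lemma W_site w S : Wspec H K w -> incl S (rays_upto h) ->
  In (uvec H w) S -> In (vvec H w) S -> ~ In w S ->
  cone2 S (uvec H w) (vvec H w) /\ sing_index (uvec H w) (vvec H w) > 2 * (K - 1).
Proof.
  destruct w as [a b]. intros Hs Hi Hu Hv Hw.
  pose proof Hs as Hs'. unfold Wspec in Hs'; simpl in Hs'.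
  destruct (u_facts H K a b HK Hs) as [u1 [u2 [Eu [Du Bu]]]].
  destruct (v_facts H K a b HK Hs) as [v1 [v2 [Ev [Dv Bv]]]].
  rewrite Eu, Ev in *.
  set (m := det (u1,u2) (v1,v2)).
  assert (Hv1 : v1 = - u1 + m * a).
  { pose proof (cramer1 u1 u2 a b v1 v2). unfold m, det in *; simpl in *. nia. }
  assert (Hm : m > 2 * (K - 1)) by nia.
  split.
  - repeat split; auto; [lia|].
    intros [z1 z2] Hz [Hz1 Hz2]. pose proof Hz as HzS.
    apply Hi, in_rays in Hz as [Hzb1 [Hzb2 Hzg]].
    destruct (Z.lt_total (det (z1,z2) (a,b)) 0) as [Hl|[He|Hg]].
    + apply (no_between a b v1 v2 z1 z2 H); try (unfold det in *; simpl in *; lia).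
    + pose proof (cramer1 u1 u2 a b z1 z2). pose proof (cramer2 u1 u2 a b z1 z2).
      assert (Hd1 : det (u1,u2) (a,b) = 1) by (unfold det; simpl; lia).
      rewrite Hd1, He in H0, H1.
      set (c := det (u1,u2) (z1,z2)) in *.
      assert (c = 1).
      { apply (prim_mult c a b); [|lia]. replace (c*a) with z1 by lia.
        replace (c*b) with z2 by lia. auto. }
      apply Hw. replace a with z1 by lia. replace b with z2 by lia. auto.
    + apply (no_between u1 u2 a b z1 z2 H); try (unfold det in *; simpl in *; lia).
  - unfold sing_index. fold m. lia.
Qed.
End Sites.

Open Scope Z_scope.

Definition wmu (H : Z) (w : pt) : pt := (fst w - fst (uvec H w), snd w - snd (uvec H w)).

Section Sites2.
Variable h : nat.
Let H := Z.of_nat h.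
Variable K : Z.
Hypothesis HK : 3 <= K.

Lemma Wspec_bounds a b : Wspec H K (a,b) -> 1 <= b < a /\ 3 * a <= H /\ Z.gcd a b = 1.
Proof. unfold Wspec; cbn [fst snd]; intros [H1 [H2 H3]]. split; [exact H1|split; [|exact H3]]. pose proof HK. nia. Qed.

Lemma site_in_rays w : Wspec H K w ->
  In w (rays_upto h) /\ In (uvec H w) (rays_upto h) /\ In (vvec H w) (rays_upto h) /\
  In (wmu H w) (rays_upto h).
Proof.
  destruct w as [a b]; intros Hs.
  destruct (Wspec_bounds a b Hs) as [Hb [Ha Hg]].
  destruct (u_facts H K a b HK Hs) as [u1 [u2 [Eu [Du Bu]]]].
  destruct (v_facts H K a b HK Hs) as [v1 [v2 [Ev [Dv Bv]]]].
  unfold wmu. rewrite Eu, Ev; simpl. fold H.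
  split; [apply in_rays; fold H; repeat split; lia|].
  split; [apply in_rays; fold H; split; [lia|split; [lia|]]|].
  { apply (det_gcd1' (a,b) (u1,u2)). unfold det; simpl; lia. }
  split; [apply in_rays; fold H; split; [lia|split; [lia|]]|].
  { apply (det_gcd1 (a,b) (v1,v2)). unfold det; simpl; lia. }
  apply in_rays; fold H; split; [lia|split; [lia|]].
  apply (det_gcd1 (u1,u2) (a - u1, b - u2)). unfold det; simpl; lia.
Qed.

Lemma site_distinct w : Wspec H K w ->
  uvec H w <> w /\ vvec H w <> w /\ uvec H w <> vvec H w /\ wmu H w <> w /\ wmu H w <> uvec H w.
Proof.
  destruct w as [a b]; intros Hs.
  destruct (Wspec_bounds a b Hs) as [Hb [Ha Hg]].
  destruct (u_facts H K a b HK Hs) as [u1 [u2 [Eu [Du Bu]]]].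
  destruct (v_facts H K a b HK Hs) as [v1 [v2 [Ev [Dv Bv]]]].
  unfold wmu. rewrite Eu, Ev; simpl.
  repeat split; intro E; inversion E; subst; try lia.
Qed.

Lemma U_site w S : Wspec H K w -> incl S (rays_upto h) ->
  In (uvec H w) S -> ~ In w S -> ~ In (wmu H w) S ->
  (exists r, In r S /\ det (uvec H w) r > 0) -> ~ smooth S.
Proof.
  destruct w as [a b]. intros Hs Hi Hu Hw Hwu Hr Hsm.
  destruct (Wspec_bounds a b Hs) as [Hb [Ha Hg]].
  destruct (u_facts H K a b HK Hs) as [u1 [u2 [Eu [Du Bu]]]].
  unfold wmu in Hwu. rewrite Eu in *; simpl in Hwu.
  destruct (cone_exists S _ Hu Hr) as [[v1 v2] Hc].
  pose proof (Hsm _ _ Hc) as H1. unfold sing_index in H1.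
  destruct Hc as [_ [HvS [Hpos _]]].
  assert (Hd : det (u1,u2) (v1,v2) = 1) by lia.
  pose proof (cramer1 u1 u2 a b v1 v2) as C1. pose proof (cramer2 u1 u2 a b v1 v2) as C2.
  assert (Hd1 : det (u1,u2) (a,b) = 1) by (unfold det; simpl; lia).
  rewrite Hd1, Hd in C1, C2.
  set (t := det (v1,v2) (a,b)) in *.
  pose proof HvS as HvR. apply Hi, in_rays in HvR as [Hv1 [Hv2 _]]. fold H in Hv1, Hv2.
  destruct (Z.lt_total t 0) as [Ht|[Ht|Ht]].
  - destruct (Z.eq_dec t (-1)) as [Ht1|Ht1].
    + apply Hwu. replace (a - u1) with v1 by lia. replace (b - u2) with v2 by lia. auto.
    + nia.
  - apply Hw. replace a with v1 by lia. replace b with v2 by lia. auto.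
  - nia.
Qed.

Lemma u_inj w w' : Wspec H K w -> Wspec H K w' -> uvec H w = uvec H w' -> w = w'.
Proof.
  destruct w as [a b], w' as [a' b']. intros Hs Hs' E.
  destruct (Wspec_bounds a b Hs) as [Hb [Ha Hg]].
  destruct (Wspec_bounds a' b' Hs') as [Hb' [Ha' Hg']].
  destruct (u_facts H K a b HK Hs) as [u1 [u2 [Eu [Du Bu]]]].
  destruct (u_facts H K a' b' HK Hs') as [x1 [x2 [Ex [Dx Bx]]]].
  rewrite Eu, Ex in E. inversion E; subst x1 x2.
  destruct (Z.lt_total (det (a,b) (a',b')) 0) as [Hl|[He|Hgt]].
  - exfalso. apply (no_between u1 u2 a b a' b' H); try (unfold det in *; cbn [fst snd] in *; lia).
  - pose proof (cramer1 u1 u2 a b a' b'). pose proof (cramer2 u1 u2 a b a' b').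
    unfold det in *; cbn [fst snd] in *. f_equal; nia.
  - exfalso. apply (no_between u1 u2 a' b' a b H); try (unfold det in *; cbn [fst snd] in *; lia).
Qed.

Lemma v_inj w w' : Wspec H K w -> Wspec H K w' -> vvec H w = vvec H w' -> w = w'.
Proof.
  destruct w as [a b], w' as [a' b']. intros Hs Hs' E.
  destruct (Wspec_bounds a b Hs) as [Hb [Ha Hg]].
  destruct (Wspec_bounds a' b' Hs') as [Hb' [Ha' Hg']].
  destruct (v_facts H K a b HK Hs) as [u1 [u2 [Eu [Du Bu]]]].
  destruct (v_facts H K a' b' HK Hs') as [x1 [x2 [Ex [Dx Bx]]]].
  rewrite Eu, Ex in E. inversion E; subst x1 x2.
  destruct (Z.lt_total (det (a,b) (a',b')) 0) as [Hl|[He|Hgt]].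
  - exfalso. apply (no_between a' b' u1 u2 a b H); try (unfold det in *; cbn [fst snd] in *; lia).
  - pose proof (cramer1 a b u1 u2 a' b'). pose proof (cramer2 a b u1 u2 a' b').
    unfold det in *; cbn [fst snd] in *. f_equal; nia.
  - exfalso. apply (no_between a b u1 u2 a' b' H); try (unfold det in *; cbn [fst snd] in *; lia).
Qed.

Lemma u_ne_v w w' : Wspec H K w -> Wspec H K w' -> uvec H w = vvec H w' -> False.
Proof.
  destruct w as [a b], w' as [a' b']. intros Hs Hs' E.
  destruct (Wspec_bounds a b Hs) as [Hb [Ha Hg]].
  destruct (Wspec_bounds a' b' Hs') as [Hb' [Ha' Hg']].
  destruct (u_facts H K a b HK Hs) as [u1 [u2 [Eu [Du Bu]]]].
  destruct (v_facts H K a' b' HK Hs') as [x1 [x2 [Ex [Dx Bx]]]].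
  rewrite Eu, Ex in E. inversion E; subst x1 x2.
  pose proof (cramer1 u1 u2 a b a' b').
  unfold det in *; cbn [fst snd] in *.
  set (c := a' * b - b' * a) in *.
  assert (Hc : a + a' = c * u1) by nia.
  assert (u1 > 0) by lia.
  destruct (Z.le_gt_cases c 0) as [Hc0|Hc0].
  - assert (c * u1 <= 0) by (apply Z.mul_nonpos_nonneg; lia). lia.
  - assert (c * u1 >= 1 * u1) by (apply Z.le_ge, Z.mul_le_mono_nonneg_r; lia). lia.
Qed.

Lemma wmu_inj w w' : Wspec H K w -> Wspec H K w' -> wmu H w = wmu H w' -> w = w'.
Proof.
  destruct w as [a b], w' as [a' b']. intros Hs Hs' E.
  destruct (Wspec_bounds a b Hs) as [Hb [Ha Hg]].
  destruct (Wspec_bounds a' b' Hs') as [Hb' [Ha' Hg']].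
  destruct (u_facts H K a b HK Hs) as [u1 [u2 [Eu [Du Bu]]]].
  destruct (u_facts H K a' b' HK Hs') as [x1 [x2 [Ex [Dx Bx]]]].
  unfold wmu in E. rewrite Eu, Ex in E. simpl in E. inversion E.
  set (z1 := a - u1) in *. set (z2 := b - u2) in *.
  pose proof (cramer1 z1 z2 a b a' b'). pose proof (cramer2 z1 z2 a b a' b').
  unfold det in *; cbn [fst snd] in *.
  set (c := a' * b - b' * a) in *.
  assert (Hz : z1 * b - z2 * a = -1) by (unfold z1, z2; nia).
  assert (Hz' : z1 * b' - z2 * a' = -1) by (unfold z1, z2; nia).
  rewrite Hz, Hz' in *.
  assert (E1 : a - a' = c * z1) by lia.
  assert (E2 : b - b' = c * z2) by lia.
  assert (Hz1 : z1 < - 0 - a) by (unfold z1; lia).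
  assert (c = 0).
  { destruct (Z.le_gt_cases c 0) as [Hc0|Hc0]; [destruct (Z.le_gt_cases 0 c) as [Hc1|Hc1]|].
    - lia.
    - assert (c * z1 >= (-1) * z1) by (apply Z.le_ge, Z.mul_le_mono_nonpos_r; lia). lia.
    - assert (c * z1 <= 1 * z1) by (apply Z.mul_le_mono_nonpos_r; lia). lia. }
  f_equal; nia.
Qed.
End Sites2.

Open Scope nat_scope.

Definition sumn {X} (D : list X) (F : X -> nat) : nat := fold_right (fun d acc => F d + acc) 0 D.

Lemma sumn_plus {X} (D : list X) F G : sumn D (fun d => F d + G d) = sumn D F + sumn D G.
Proof. induction D; simpl; lia. Qed.
Lemma sumn_ext {X} (D : list X) F G : (forall d, F d = G d) -> sumn D F = sumn D G.
Proof. intros H; induction D; simpl; auto. Qed.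
Lemma sumn_le {X} (D : list X) F G : (forall d, In d D -> F d <= G d) -> sumn D F <= sumn D G.
Proof. intros H; induction D; simpl; auto. pose proof (H a (or_introl eq_refl)).
  assert (sumn D F <= sumn D G) by (apply IHD; intros; apply H; right; auto). lia. Qed.

Lemma sumn_ge1 {X} (D : list X) (F : X -> nat) d : In d D -> 1 <= F d -> 1 <= sumn D F.
Proof. induction D; simpl; intros Hin H1; [destruct Hin|destruct Hin as [->|Hin]]; [lia|].
  specialize (IHD Hin H1); lia. Qed.

Lemma union_bound {X Y} (L : list X) (D : list Y) (f : X -> bool) (g : Y -> X -> bool) :
  (forall x, In x L -> f x = true -> exists d, In d D /\ g d x = true) ->
  length (filter f L) <= sumn D (fun d => length (filter (g d) L)).
Proof.
  induction L as [|x L IH]; intros H; simpl.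
  - clear. induction D; simpl; lia.
  - assert (IH' := IH (fun y Hy => H y (or_intror Hy))).
    rewrite (sumn_ext D _ (fun d => (if g d x then 1 else 0) + length (filter (g d) L)))
      by (intros d; destruct (g d x); reflexivity).
    rewrite sumn_plus.
    destruct (f x) eqn:Ef; simpl; [|lia].
    destruct (H x (or_introl eq_refl) Ef) as [d [Hd Hg]].
    assert (1 <= sumn D (fun d => if g d x then 1 else 0))
      by (apply (sumn_ge1 D _ d Hd); rewrite Hg; lia).
    lia.
Qed.

Lemma count_prod {X Y} (A : list X) (B : list Y) f g :
  length (filter (fun xy => f (fst xy) && g (snd xy)) (list_prod A B)) =
  length (filter f A) * length (filter g B).
Proof.
  induction A as [|x A IH]; simpl; auto.
  rewrite filter_app, length_app, IH.
  assert (E : length (filter (fun xy => f (fst xy) && g (snd xy)) (map (fun y => (x, y)) B))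
              = if f x then length (filter g B) else 0).
  { clear. induction B; simpl. destruct (f x); auto.
    destruct (f x) eqn:E, (g a) eqn:E2; simpl; rewrite IHB; destruct (f x); try discriminate; auto. }
  rewrite E. destruct (f x); simpl; lia.
Qed.

Lemma count_mult n d : 1 <= d -> length (filter (fun a => a mod d =? 0) (seq 1 n)) <= n / d.
Proof.
  intros Hd. induction n.
  - simpl. lia.
  - rewrite seq_S, filter_app, length_app. simpl.
    assert (n / d <= S n / d) by (apply Nat.Div0.div_le_mono; lia).
    destruct ((S n) mod d =? 0) eqn:E; simpl; [|lia].
    apply Nat.eqb_eq in E.
    assert (d * (n / d) <= n) by (apply Nat.Div0.mul_div_le; lia).
    pose proof (Nat.div_mod (S n) d ltac:(lia)). rewrite E in H1.
    assert (n / d < S n / d) by nia. lia.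
Qed.

Definition cop (n : nat) : list (nat * nat) :=
  filter (fun xy => Z.eqb (Z.gcd (Z.of_nat (fst xy)) (Z.of_nat (snd xy))) 1)
    (list_prod (seq 1 n) (seq 1 n)).

Definition sumr {X} (D : list X) (F : X -> R) : R := fold_right (fun d acc => (F d + acc)%R) 0%R D.
Lemma sumr_INR {X} (D : list X) F : INR (sumn D F) = sumr D (fun d => INR (F d)).
Proof. induction D; simpl; auto. rewrite plus_INR, IHD; auto. Qed.
Lemma sumr_app {X} (A B : list X) F : sumr (A ++ B) F = (sumr A F + sumr B F)%R.
Proof. induction A; simpl. lra. rewrite IHA; lra. Qed.
Lemma sumr_le {X} (D : list X) F G : (forall d, In d D -> F d <= G d)%R -> (sumr D F <= sumr D G)%R.
Proof. intros H; induction D; simpl. lra. pose proof (H a (or_introl eq_refl)).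
  assert (sumr D F <= sumr D G)%R by (apply IHD; intros; apply H; right; auto). lra. Qed.
Lemma sumr_scal {X} (D : list X) F c : sumr D (fun d => c * F d)%R = (c * sumr D F)%R.
Proof. induction D; simpl. lra. rewrite IHD; lra. Qed.

Lemma tail_sum m : (sumr (seq 3 m) (fun d => / (INR d * INR d)) <= / 2 - / (INR m + 2))%R.
Proof.
  induction m.
  - simpl. lra.
  - rewrite seq_S, sumr_app. cbn [sumr fold_right].
    rewrite S_INR, plus_INR. replace (INR 3) with 3%R by (simpl; ring).
    assert (0 <= INR m)%R by apply pos_INR.
    assert (/ ((3 + INR m) * (3 + INR m)) <= / (INR m + 2) - / (INR m + 1 + 2))%R.
    { replace (/ (INR m + 2) - / (INR m + 1 + 2))%R with (/ ((INR m + 2) * (INR m + 3)))%R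
        by (field; lra).
      apply Rinv_le_contravar; nra. }
    lra.
Qed.

Lemma inv_sum n : (sumr (seq 2 n) (fun d => / (INR d * INR d)) <= 3 / 4)%R.
Proof.
  destruct n. simpl; lra.
  simpl seq. simpl sumr. pose proof (tail_sum n).
  assert (0 <= INR n)%R by apply pos_INR.
  assert (0 < / (INR n + 2))%R by (apply Rinv_0_lt_compat; lra).
  simpl INR. lra.
Qed.

Lemma div_INR n d : 1 <= d -> (INR (n / d) <= INR n / INR d)%R.
Proof.
  intros Hd. assert (d * (n / d) <= n) by (apply Nat.Div0.mul_div_le; lia).
  apply le_INR in H. rewrite mult_INR in H.
  assert (0 < INR d)%R by (apply lt_0_INR; lia).
  apply (Rmult_le_reg_l (INR d)); auto. field_simplify; lra.
Qed.

Lemma cop_count n : (INR n * INR n / 4 <= INR (length (cop n)))%R.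
Proof.
  set (P := list_prod (seq 1 n) (seq 1 n)).
  pose proof (filter_length (fun xy => Z.eqb (Z.gcd (Z.of_nat (fst xy)) (Z.of_nat (snd xy))) 1) P) as HL.
  unfold P in HL at 3. rewrite length_prod, length_seq in HL. fold P in HL.
  set (bad := length (filter (fun x => negb _) P)) in HL.
  assert (Hb : bad <= sumn (seq 2 n) (fun d => length (filter
            (fun xy => (fst xy mod d =? 0) && (snd xy mod d =? 0)) P))).
  { apply union_bound. intros [a b] Hab Hf. simpl in Hf.
    apply negb_true_iff, Z.eqb_neq in Hf.
    unfold P in Hab. apply in_prod_iff in Hab as [Ha Hb]. apply in_seq in Ha, Hb.
    set (g := Z.gcd (Z.of_nat a) (Z.of_nat b)) in *.
    assert (Hg0 : (0 <= g)%Z) by apply Z.gcd_nonneg.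
    assert (Hga : (g | Z.of_nat a)%Z) by apply Z.gcd_divide_l.
    assert (Hgb : (g | Z.of_nat b)%Z) by apply Z.gcd_divide_r.
    assert (Hgn : (g <> 0)%Z) by (intro E; apply Z.gcd_eq_0_l in E; lia).
    assert (Hle : (g <= Z.of_nat a)%Z) by (apply Z.divide_pos_le; auto; lia).
    exists (Z.to_nat g). split.
    - apply in_seq. lia.
    - simpl. apply andb_true_iff. split; apply Nat.eqb_eq.
      + apply Nat2Z.inj. rewrite Nat2Z.inj_mod, Z2Nat.id by lia. apply Z.mod_divide; auto.
      + apply Nat2Z.inj. rewrite Nat2Z.inj_mod, Z2Nat.id by lia. apply Z.mod_divide; auto. }
  unfold P in Hb.
  rewrite (sumn_ext _ _ (fun d => length (filter (fun a => a mod d =? 0) (seq 1 n)) *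
                                  length (filter (fun a => a mod d =? 0) (seq 1 n)))) in Hb
    by (intros d; exact (count_prod (seq 1 n) (seq 1 n) (fun a => a mod d =? 0) (fun a => a mod d =? 0))).
  apply le_INR in Hb. rewrite sumr_INR in Hb.
  assert (Hs : (sumr (seq 2 n) (fun d => INR (length (filter (fun a => a mod d =? 0) (seq 1 n)) *
          length (filter (fun a => a mod d =? 0) (seq 1 n))))
          <= sumr (seq 2 n) (fun d => INR n * INR n * / (INR d * INR d)))%R).
  { apply sumr_le. intros d Hd. apply in_seq in Hd.
    rewrite mult_INR. pose proof (count_mult n d ltac:(lia)) as C.
    apply le_INR in C. pose proof (div_INR n d ltac:(lia)).
    assert (0 < INR d)%R by (apply lt_0_INR; lia).
    assert (0 <= INR (length (filter (fun a => a mod d =? 0) (seq 1 n))))%R by apply pos_INR.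
    assert (0 <= INR n)%R by apply pos_INR.
    assert (INR (length (filter (fun a => a mod d =? 0) (seq 1 n))) <= INR n / INR d)%R by lra.
    replace (INR n * INR n * / (INR d * INR d))%R with ((INR n / INR d) * (INR n / INR d))%R
      by (field; lra).
    apply Rmult_le_compat; lra. }
  rewrite sumr_scal in Hs. pose proof (inv_sum n).
  assert (0 <= INR n * INR n)%R by (pose proof (pos_INR n); nra).
  apply (f_equal INR) in HL. rewrite plus_INR, mult_INR in HL.
  fold (cop n) in HL.
  assert (INR n * INR n * sumr (seq 2 n) (fun d => / (INR d * INR d)) <= INR n * INR n * (3/4))%R
    by (apply Rmult_le_compat_l; auto).
  assert (INR bad <= INR n * INR n * (3/4))%R by (eapply Rle_trans; [exact Hb|]; lra).
  unfold P in HL. fold (cop n) in HL. lra.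
Qed.

Open Scope Z_scope.

Definition Wl (h Kn : nat) : list pt :=
  map (fun xy => (Z.of_nat (fst xy + snd xy), Z.of_nat (snd xy))) (cop (h / (2 * Kn))).

Definition Rl (h : nat) : list pt :=
  map (fun xy => (- Z.of_nat (fst xy), Z.of_nat (snd xy))) (cop h).

Lemma in_cop n a b : In (a, b) (cop n) -> (1 <= a <= n)%nat /\ (1 <= b <= n)%nat /\
   Z.gcd (Z.of_nat a) (Z.of_nat b) = 1.
Proof.
  unfold cop. rewrite filter_In, in_prod_iff, !in_seq, Z.eqb_eq. simpl. lia.
Qed.


Lemma NoDup_prod_nat (X Y : list nat) : NoDup X -> NoDup Y -> NoDup (list_prod X Y).
Proof.
  induction X as [|x X IH]; simpl; intros HX HY; [constructor|].
  inversion HX; subst. apply NoDup_app.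
  - apply NoDup_map_inj; auto. intros a b E; inversion E; auto.
  - apply IH; auto.
  - intros [a b] Ha Hb. apply in_map_iff in Ha as [y [E _]]. inversion E; subst.
    apply in_prod_iff in Hb as [Hx _]. auto.
Qed.

Lemma NoDup_cop n : NoDup (cop n).
Proof. unfold cop. apply NoDup_filter, NoDup_prod_nat; apply seq_NoDup. Qed.

Lemma Wl_spec h Kn w : (1 <= Kn)%nat -> In w (Wl h Kn) -> Wspec (Z.of_nat h) (Z.of_nat Kn) w.
Proof.
  intros HK Hw. unfold Wl in Hw. apply in_map_iff in Hw as [[a b] [<- Hab]].
  apply in_cop in Hab as [Ha [Hb Hg]]. unfold Wspec; cbn [fst snd].
  assert (Hd : (2 * Kn * (h / (2 * Kn)) <= h)%nat) by (apply Nat.Div0.mul_div_le).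
  split; [lia|]. split; [nia|].
  rewrite Nat2Z.inj_add, Z.gcd_comm, Z.gcd_add_diag_r, Z.gcd_comm. auto.
Qed.

Lemma Wl_NoDup h Kn : NoDup (Wl h Kn).
Proof.
  unfold Wl. apply NoDup_map_inj; [|apply NoDup_cop].
  intros [a b] [c d] E. inversion E. f_equal; lia.
Qed.

Lemma Wl_length h Kn : length (Wl h Kn) = length (cop (h / (2 * Kn))).
Proof. unfold Wl; apply length_map. Qed.

Lemma Rl_in h r : In r (Rl h) -> In r (rays_upto h) /\ fst r < 0 /\ 0 < snd r.
Proof.
  unfold Rl. intros Hr. apply in_map_iff in Hr as [[a b] [<- Hab]].
  apply in_cop in Hab as [Ha [Hb Hg]]. cbn [fst snd].
  split; [|lia]. apply in_rays. split; [lia|]. split; [lia|].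
  rewrite Z.gcd_opp_l. auto.
Qed.

Lemma Rl_NoDup h : NoDup (Rl h).
Proof.
  unfold Rl. apply NoDup_map_inj; [|apply NoDup_cop].
  intros [a b] [c d] E. inversion E. f_equal; lia.
Qed.

Lemma Rl_length h : length (Rl h) = length (cop h).
Proof. unfold Rl; apply length_map. Qed.

Lemma NoDup_flat_map_disj {X} (W : list X) (dp : X -> list pt) :
  NoDup W -> (forall w, In w W -> NoDup (dp w)) ->
  (forall w w' x, In w W -> In w' W -> w <> w' -> In x (dp w) -> In x (dp w') -> False) ->
  NoDup (flat_map dp W).
Proof.
  induction W as [|w W IH]; simpl; intros Hn Hd Hdis; [constructor|].
  inversion Hn; subst. apply NoDup_app.
  - apply Hd; auto.
  - apply IH; auto. intros; eapply Hdis; eauto.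
  - intros x Hx Hx'. apply in_flat_map in Hx' as [w' [Hw' Hx']].
    apply (Hdis w w' x); auto. intro; subst; auto.
Qed.

Open Scope R_scope.

Section Fam.
Variable h Kn : nat.
Hypothesis HKn : (3 <= Kn)%nat.
Let H := Z.of_nat h.
Let K := Z.of_nat Kn.
Lemma HK : (3 <= K)%Z. Proof. unfold K; lia. Qed.

Lemma cross_ne w w' : Wspec H K w -> Wspec H K w' ->
  uvec H w <> w' /\ vvec H w <> w' /\ wmu H w <> w' /\ wmu H w <> uvec H w'.
Proof.
  destruct w as [a b], w' as [a' b']. intros Hs Hs'.
  destruct (Wspec_bounds h K HK a b Hs) as [Hb [Ha Hg]].
  destruct (Wspec_bounds h K HK a' b' Hs') as [Hb' [Ha' Hg']].
  destruct (u_facts H K a b HK Hs) as [u1 [u2 [Eu [Du Bu]]]].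
  destruct (v_facts H K a b HK Hs) as [v1 [v2 [Ev [Dv Bv]]]].
  destruct (u_facts H K a' b' HK Hs') as [x1 [x2 [Ex [Dx Bx]]]].
  unfold wmu. rewrite Eu, Ev, Ex. cbn [fst snd].
  repeat split; intro E; inversion E; lia.
Qed.

Definition Wsucc (w : pt) (S : list pt) : Prop :=
  In (uvec H w) S /\ In (vvec H w) S /\ ~ In w S.
Definition Usucc (w : pt) (S : list pt) : Prop :=
  In (uvec H w) S /\ ~ In w S /\ ~ In (wmu H w) S.

Let l := rays_upto h.
Let W := Wl h Kn.

Lemma W_none p :
  mu l p (fun S => Forall (fun w => ~ Wsucc w S) W) = (1 - p * p * (1 - p)) ^ length W.
Proof.
  apply (mu_prod_const l p W (fun w S => ~ Wsucc w S) (fun w => [uvec H w; vvec H w; w])).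
  - intros w Hw. apply dep_not. unfold Wsucc. intros S S' HS.
    rewrite (HS (uvec H w)), (HS (vvec H w)), (HS w); simpl; tauto.
  - apply NoDup_flat_map_disj; [apply Wl_NoDup| |].
    + intros w Hw. pose proof (Wl_spec h Kn w ltac:(lia) Hw) as Hs.
      destruct (site_distinct h K HK w Hs) as [D1 [D2 [D3 _]]].
      repeat constructor; simpl; intuition.
    + intros w w' x Hw Hw' Hne Hx Hx'.
      pose proof (Wl_spec h Kn w ltac:(lia) Hw) as Hs.
      pose proof (Wl_spec h Kn w' ltac:(lia) Hw') as Hs'.
      destruct (cross_ne w w' Hs Hs') as [C1 [C2 _]].
      destruct (cross_ne w' w Hs' Hs) as [C1' [C2' _]].
      simpl in Hx, Hx'.
      destruct Hx as [<-|[<-|[<-|[]]]]; destruct Hx' as [E|[E|[E|[]]]]; auto.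
      * apply Hne; apply (u_inj h K HK); auto.
      * apply (u_ne_v h K HK w w'); auto.
      * apply (u_ne_v h K HK w' w); auto.
      * apply Hne; apply (v_inj h K HK); auto.
  - intros w Hw. pose proof (Wl_spec h Kn w ltac:(lia) Hw) as Hs.
    destruct (site_in_rays h K HK w Hs) as [I1 [I2 [I3 I4]]].
    destruct (site_distinct h K HK w Hs) as [D1 [D2 [D3 _]]].
    pose proof (mu_compl l p (Wsucc w)).
    pose proof (mu_site3 l p (uvec H w) (vvec H w) w true true false (NoDup_rays h) I2 I3 I1
                  D3 D1 D2) as M. simpl in M.
    unfold Wsucc in *. rewrite M in H0. lra.
Qed.

Lemma U_none p :
  mu l p (fun S => Forall (fun w => ~ Usucc w S) W) = (1 - p * (1 - p) * (1 - p)) ^ length W.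
Proof.
  apply (mu_prod_const l p W (fun w S => ~ Usucc w S) (fun w => [uvec H w; w; wmu H w])).
  - intros w Hw. apply dep_not. unfold Usucc. intros S S' HS.
    rewrite (HS (uvec H w)), (HS (wmu H w)), (HS w); simpl; tauto.
  - apply NoDup_flat_map_disj; [apply Wl_NoDup| |].
    + intros w Hw. pose proof (Wl_spec h Kn w ltac:(lia) Hw) as Hs.
      destruct (site_distinct h K HK w Hs) as [D1 [D2 [D3 [D4 D5]]]].
      repeat constructor; simpl; intuition.
    + intros w w' x Hw Hw' Hne Hx Hx'.
      pose proof (Wl_spec h Kn w ltac:(lia) Hw) as Hs.
      pose proof (Wl_spec h Kn w' ltac:(lia) Hw') as Hs'.
      destruct (cross_ne w w' Hs Hs') as [C1 [C2 [C3 C4]]].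
      destruct (cross_ne w' w Hs' Hs) as [C1' [C2' [C3' C4']]].
      simpl in Hx, Hx'.
      destruct Hx as [<-|[<-|[<-|[]]]]; destruct Hx' as [E|[E|[E|[]]]]; auto.
      * apply Hne; apply (u_inj h K HK); auto.
      * apply Hne; apply (wmu_inj h K HK); auto.
  - intros w Hw. pose proof (Wl_spec h Kn w ltac:(lia) Hw) as Hs.
    destruct (site_in_rays h K HK w Hs) as [I1 [I2 [I3 I4]]].
    destruct (site_distinct h K HK w Hs) as [D1 [D2 [D3 [D4 D5]]]].
    pose proof (mu_compl l p (Usucc w)).
    pose proof (mu_site3 l p (uvec H w) w (wmu H w) true false false (NoDup_rays h) I2 I1 I4
                  D1 (not_eq_sym D5) (not_eq_sym D4)) as M. simpl in M.
    unfold Usucc in *. rewrite M in H0. lra.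
Qed.
End Fam.

Open Scope R_scope.

Lemma bern x n : 0 <= x -> 1 + INR n * x <= (1 + x) ^ n.
Proof.
  intros Hx. induction n. simpl; lra.
  rewrite S_INR. simpl. assert (0 <= INR n * x) by (apply Rmult_le_pos; auto; apply pos_INR). nra.
Qed.

Lemma bern_minus x n : 0 <= x <= 1 -> 1 - INR n * x <= (1 - x) ^ n.
Proof.
  intros Hx. induction n. simpl; lra.
  rewrite S_INR. simpl. assert (0 <= INR n * x) by (apply Rmult_le_pos; try lra; apply pos_INR).
  assert (0 <= (1 - x) ^ n) by (apply pow_le; lra). nra.
Qed.

Lemma pow_le_one y n : 0 <= y <= 1 -> y ^ n <= 1.
Proof. intros Hy; induction n; simpl; [lra|]. assert (0 <= y ^ n) by (apply pow_le; lra). nra. Qed.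

Lemma pow_bound x n : 0 <= x <= 1 -> (1 - x) ^ n <= 1 / (1 + INR n * x).
Proof.
  intros Hx. pose proof (bern x n ltac:(lra)).
  assert (0 <= INR n * x) by (apply Rmult_le_pos; try lra; apply pos_INR).
  assert (P : (1 - x) ^ n * (1 + x) ^ n <= 1).
  { rewrite <- Rpow_mult_distr. replace ((1 - x) * (1 + x)) with (1 - x * x) by ring.
    apply pow_le_one. nra. }
  assert (0 <= (1 - x) ^ n) by (apply pow_le; lra).
  apply (Rmult_le_reg_r (1 + INR n * x)); [lra|].
  replace (1 / (1 + INR n * x) * (1 + INR n * x)) with 1 by (field; lra).
  nra.
Qed.

Lemma inv_mono a b : 0 <= a <= b -> 1 / (1 + b) <= 1 / (1 + a).
Proof. intros. apply Rmult_le_compat_l; [lra|]. apply Rinv_le_contravar; lra. Qed.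

Lemma inv_pos a : 0 <= a -> 0 <= 1 / (1 + a).
Proof. intros. apply Rmult_le_pos; [lra|]. left; apply Rinv_0_lt_compat; lra. Qed.

Lemma length_rays h : (length (rays_upto h) <= (2 * h + 1) * (2 * h + 1))%nat.
Proof.
  unfold rays_upto. eapply Nat.le_trans; [apply filter_length_le|].
  assert (E : forall (X Y : list Z), flat_map (fun x => map (fun y => (x, y)) Y) X = list_prod X Y).
  { induction X; simpl; intros; auto. rewrite IHX; auto. }
  rewrite E. eapply Nat.le_trans; [apply Nat.eq_le_incl, length_prod|]. unfold zrange. rewrite length_map, length_seq. lia.
Qed.

Lemma all_in_smooth h S : incl S (rays_upto h) -> Forall (fun r => In r S) (rays_upto h) -> smooth S.
Proof.
  intros Hi Hall u v [Hu [Hv [Hd Hno]]].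
  rewrite Forall_forall in Hall.
  unfold sing_index. rewrite (full_smooth h u v); auto.
Qed.

Lemma none_smooth h S : incl S (rays_upto h) -> Forall (fun r => ~ In r S) (rays_upto h) -> smooth S.
Proof.
  intros Hi Hall u v [Hu _]. rewrite Forall_forall in Hall. exfalso; apply (Hall u); auto.
Qed.

Lemma part1a h p : 0 <= p <= 1 ->
  1 - INR ((2 * h + 1) * (2 * h + 1)) * (1 - p) <= probT h p smooth.
Proof.
  intros Hp. rewrite probT_mu.
  eapply Rle_trans; [|apply (mu_mono _ _ (fun S => Forall (fun r => In r S) (rays_upto h)))];
    auto; [|intros; apply (all_in_smooth h); auto].
  rewrite mu_all_in; auto using NoDup_rays, incl_refl.
  replace (p) with (1 - (1 - p)) at 2 by ring.
  eapply Rle_trans; [|apply bern_minus; lra].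
  pose proof (length_rays h). apply le_INR in H. nra.
Qed.

Lemma part1b h p : 0 <= p <= 1 ->
  1 - INR ((2 * h + 1) * (2 * h + 1)) * p <= probT h p smooth.
Proof.
  intros Hp. rewrite probT_mu.
  eapply Rle_trans; [|apply (mu_mono _ _ (fun S => Forall (fun r => ~ In r S) (rays_upto h)))];
    auto; [|intros; apply (none_smooth h); auto].
  rewrite mu_all_out; auto using NoDup_rays, incl_refl.
  eapply Rle_trans; [|apply bern_minus; lra].
  pose proof (length_rays h). apply le_INR in H. nra.
Qed.

Open Scope R_scope.

Lemma Wsucc_sing h Kn w S : (3 <= Kn)%nat -> In w (Wl h Kn) -> incl S (rays_upto h) ->
  Wsucc h w S ->
  exists u v, cone2 S u v /\ (sing_index u v > 2 * (Z.of_nat Kn - 1))%Z.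
Proof.
  intros HK Hw Hi [H1 [H2 H3]].
  pose proof (Wl_spec h Kn w ltac:(lia) Hw) as Hs.
  destruct (W_site h (Z.of_nat Kn) ltac:(lia) w S Hs Hi H1 H2 H3) as [Hc Hsi].
  eauto.
Qed.

Lemma Usucc_sing h Kn w S : (3 <= Kn)%nat -> In w (Wl h Kn) -> incl S (rays_upto h) ->
  Usucc h w S -> (exists r, In r (Rl h) /\ In r S) -> ~ smooth S.
Proof.
  intros HK Hw Hi [H1 [H2 H3]] [r [Hr HrS]].
  pose proof (Wl_spec h Kn w ltac:(lia) Hw) as Hs.
  apply (U_site h (Z.of_nat Kn) ltac:(lia) w S Hs Hi H1 H2 H3).
  exists r. split; auto.
  destruct w as [a b].
  destruct (u_facts (Z.of_nat h) (Z.of_nat Kn) a b ltac:(lia) Hs) as [u1 [u2 [Eu [Du Bu]]]].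
  rewrite Eu. destruct (Rl_in h r Hr) as [_ [R1 R2]]. destruct r as [r1 r2].
  unfold det; cbn [fst snd] in *. nia.
Qed.

Lemma part2 h p : 0 <= p <= 1 ->
  let m := INR (length (cop (h / (2 * 3)))) in
  let r := INR (length (cop h)) in
  1 - (1 / (1 + m * ((1 - p) / 4)) + 1 / (1 + m * (p / 4)) + 1 / (1 + r * p))
    <= probT h p (fun S => ~ smooth S).
Proof.
  intros Hp m r. rewrite probT_mu.
  assert (Em : INR (length (Wl h 3)) = m) by (unfold m; rewrite Wl_length; auto).
  assert (Er : INR (length (Rl h)) = r) by (unfold r; rewrite Rl_length; auto).
  assert (Hm : 0 <= m) by (rewrite <- Em; apply pos_INR). assert (Hr : 0 <= r) by (rewrite <- Er; apply pos_INR).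
  clearbody m r.
  pose proof (mu_compl (rays_upto h) p smooth).
  assert (A1 := inv_pos (m * ((1 - p) / 4)) ltac:(apply Rmult_le_pos; lra)).
  assert (A2 := inv_pos (m * (p / 4)) ltac:(apply Rmult_le_pos; lra)).
  assert (A3 := inv_pos (r * p) ltac:(apply Rmult_le_pos; lra)).
  assert (mu (rays_upto h) p smooth <=
     1 / (1 + m * ((1 - p) / 4)) + 1 / (1 + m * (p / 4)) + 1 / (1 + r * p)); [|lra].
  destruct (Rle_lt_dec (1/2) p) as [Hp2|Hp2].
  - eapply Rle_trans; [apply (mu_mono _ _ _ (fun S => Forall (fun w => ~ Wsucc h w S) (Wl h 3))); auto|].
    + intros S Hi Hsm. apply Forall_forall. intros w Hw Hsu.
      destruct (Wsucc_sing h 3 w S ltac:(lia) Hw Hi Hsu) as [u [v [Hc Hsi]]].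
      apply Hsm in Hc. lia.
    + rewrite W_none by lia.
      eapply Rle_trans; [apply pow_bound; split; [|nra]|].
      * assert (0 <= p * p) by nra. nra.
      * rewrite Em. apply Rle_trans with (1 / (1 + m * ((1 - p) / 4))); [apply inv_mono; split|].
        -- apply Rmult_le_pos; lra.
        -- apply Rmult_le_compat_l; auto. assert (1/4 <= p*p) by nra.
           assert (0 <= 1 - p) by lra. nra.
        -- lra.
  - rewrite <- (mu_add _ p smooth (fun S => exists r, In r (Rl h) /\ In r S)).
    assert (B1 : mu (rays_upto h) p (fun S => smooth S /\ exists r, In r (Rl h) /\ In r S)
              <= 1 / (1 + m * (p / 4))).
    { eapply Rle_trans; [apply (mu_mono _ _ _ (fun S => Forall (fun w => ~ Usucc h w S) (Wl h 3))); auto|].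
      + intros S Hi [Hsm HG]. apply Forall_forall. intros w Hw Hsu.
        apply (Usucc_sing h 3 w S ltac:(lia) Hw Hi Hsu HG Hsm).
      + rewrite U_none by lia.
        eapply Rle_trans; [apply pow_bound; split; [|nra]|].
        * assert (0 <= (1 - p) * (1 - p)) by nra. nra.
        * rewrite Em. apply inv_mono; split.
          -- apply Rmult_le_pos; lra.
          -- apply Rmult_le_compat_l; auto. assert (1/4 <= (1-p)*(1-p)) by nra.
             assert (0 <= p) by lra. nra. }
    assert (B2 : mu (rays_upto h) p (fun S => smooth S /\ ~ exists r, In r (Rl h) /\ In r S)
              <= 1 / (1 + r * p)).
    { eapply Rle_trans; [apply (mu_mono _ _ _ (fun S => Forall (fun x => ~ In x S) (Rl h))); auto|].
      + intros S Hi [_ HG]. apply Forall_forall. intros x Hx HxS. apply HG; eauto.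
      + rewrite mu_all_out.
        * rewrite <- Er. replace (r * p) with (INR (length (Rl h)) * (1 - (1 - p))) by (rewrite Er; ring).
          apply pow_bound. lra.
        * apply NoDup_rays.
        * apply Rl_NoDup.
        * intros x Hx; apply (Rl_in h x Hx). }
    lra.
Qed.

Lemma part3 h p k : (k > 1)%Z -> 0 <= p <= 1 ->
  let m := INR (length (cop (h / (2 * (Z.to_nat k + 3))))) in
  1 - (1 / (1 + m * ((1 - p) / 4)) + 1 / (1 + m * (p * p / 2)))
    <= probT h p (has_sing_ge k).
Proof.
  intros Hk Hp m. rewrite probT_mu.
  set (Kn := (Z.to_nat k + 3)%nat) in *.
  assert (Em : INR (length (Wl h Kn)) = m) by (unfold m; rewrite Wl_length; auto).
  assert (Hm : 0 <= m) by (rewrite <- Em; apply pos_INR).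
  clearbody m.
  pose proof (mu_compl (rays_upto h) p (has_sing_ge k)).
  assert (A1 := inv_pos (m * ((1 - p) / 4)) ltac:(apply Rmult_le_pos; lra)).
  assert (A2 := inv_pos (m * (p * p / 2)) ltac:(apply Rmult_le_pos; nra)).
  assert (mu (rays_upto h) p (fun S => ~ has_sing_ge k S) <=
     1 / (1 + m * ((1 - p) / 4)) + 1 / (1 + m * (p * p / 2))); [|lra].
  eapply Rle_trans; [apply (mu_mono _ _ _ (fun S => Forall (fun w => ~ Wsucc h w S) (Wl h Kn))); auto|].
  - intros S Hi Hns. apply Forall_forall. intros w Hw Hsu.
    destruct (Wsucc_sing h Kn w S ltac:(lia) Hw Hi Hsu) as [u [v [Hc Hsi]]].
    apply Hns. exists u, v. split; auto. lia.
  - rewrite W_none by lia.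
    eapply Rle_trans; [apply pow_bound; split; [|nra]|].
    + assert (0 <= p * p) by nra. nra.
    + rewrite Em. assert (0 <= p * p * (1 - p)) by (assert (0 <= p*p) by nra; nra).
      destruct (Rle_lt_dec (1/2) p) as [Hp2|Hp2].
      * apply Rle_trans with (1 / (1 + m * ((1 - p) / 4))); [apply inv_mono; split|].
        -- apply Rmult_le_pos; lra.
        -- apply Rmult_le_compat_l; auto. assert (1/4 <= p*p) by nra.
           assert (0 <= 1 - p) by lra. nra.
        -- lra.
      * apply Rle_trans with (1 / (1 + m * (p * p / 2))); [apply inv_mono; split|].
        -- apply Rmult_le_pos; nra.
        -- apply Rmult_le_compat_l; auto. assert (0 <= p*p) by nra. nra.
        -- lra.
Qed.

Open Scope R_scope.

Lemma whp_bound q E e :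
  (forall h, 0 <= q h <= 1) ->
  (exists H0, forall h, (h >= H0)%nat -> 1 - e h <= probT h (1 - q h) E) ->
  Un_cv e 0 -> whp q E.
Proof.
  intros Hq [H0 HB] He eps Heps. destruct (He eps Heps) as [N HN].
  exists (max N H0). intros n Hn.
  specialize (HN n ltac:(lia)). specialize (HB n ltac:(lia)).
  assert (P1 : probT n (1 - q n) E <= 1) by (rewrite probT_mu; apply mu_le1; specialize (Hq n); lra).
  unfold R_dist in *. rewrite Rminus_0_r in HN.
  rewrite Rabs_left1 by lra. apply Rabs_def2 in HN. lra.
Qed.

Lemma cv_scal f c : Un_cv f 0 -> Un_cv (fun h => c * f h) 0.
Proof.
  intros Hf. replace 0 with (c * 0) by ring. apply CV_mult; auto.
  intros eps Heps. exists 0%nat. intros. unfold R_dist. rewrite Rminus_diag, Rabs_R0. auto.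
Qed.

Lemma cv_plus f g : Un_cv f 0 -> Un_cv g 0 -> Un_cv (fun h => f h + g h) 0.
Proof. intros. replace 0 with (0 + 0) by ring. apply CV_plus; auto. Qed.

Lemma cv_ext_ev f g N : (forall n, (n >= N)%nat -> f n = g n) -> Un_cv f 0 -> Un_cv g 0.
Proof.
  intros E Hf eps Heps. destruct (Hf eps Heps) as [M HM]. exists (max M N).
  intros n Hn. rewrite <- E by lia. apply HM; lia.
Qed.

Lemma INR_pos_of n : (n >= 1)%nat -> 0 < INR n.
Proof. intros; apply lt_0_INR; lia. Qed.

Lemma lim_inv (x y m : nat -> R) c gam :
  0 < c -> 0 < gam ->
  (forall h, 0 <= x h) -> (forall h, gam * x h <= y h) ->
  (exists H0, forall h, (h >= H0)%nat -> c * INR h ^ 2 <= m h) ->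
  succ x inv_sq -> Un_cv (fun h => 1 / (1 + m h * y h)) 0.
Proof.
  intros Hc Hg Hx Hy [H0 Hm] [[N1 HN1] Hcv] eps Heps.
  destruct (Hcv (eps * c * gam)) as [N2 HN2].
  { apply Rmult_lt_0_compat; auto. apply Rmult_lt_0_compat; auto. }
  exists (max (max N1 N2) (max H0 1)). intros n Hn.
  specialize (HN1 n ltac:(lia)). specialize (HN2 n ltac:(lia)). specialize (Hm n ltac:(lia)).
  pose proof (INR_pos_of n ltac:(lia)) as Hn0.
  assert (Hxn : 0 < x n) by (specialize (Hx n); destruct Hx; auto; congruence).
  unfold R_dist, inv_sq in *. rewrite Rminus_0_r in *.
  set (t := INR n) in *.
  replace (1 / t ^ 2 / x n) with (1 / (t ^ 2 * x n)) in HN2 by (field; lra).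
  assert (Hp : 0 < t ^ 2 * x n) by (apply Rmult_lt_0_compat; auto; apply pow_lt; auto).
  assert (Hpos : 0 < 1 / (t ^ 2 * x n)) by (apply Rdiv_lt_0_compat; lra).
  rewrite Rabs_right in HN2 by lra.
  assert (Hmy : c * gam * (t ^ 2 * x n) <= m n * y n).
  { specialize (Hy n). assert (0 <= c * t ^ 2) by (apply Rmult_le_pos; [lra|apply pow_le; lra]).
    apply Rle_trans with ((c * t ^ 2) * (gam * x n)); [right; ring|].
    apply Rmult_le_compat; try lra. apply Rmult_le_pos; lra. }
  assert (Hcg : 0 < c * gam * (t ^ 2 * x n)) by (apply Rmult_lt_0_compat; [apply Rmult_lt_0_compat|]; auto).
  assert (Hpos2 : 0 < 1 / (1 + m n * y n)) by (apply Rdiv_lt_0_compat; lra).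
  rewrite Rabs_right by lra.
  apply Rle_lt_trans with (1 / (c * gam * (t ^ 2 * x n))).
  - apply Rmult_le_compat_l; [lra|]. apply Rinv_le_contravar; lra.
  - replace (1 / (c * gam * (t ^ 2 * x n))) with (1 / (t ^ 2 * x n) / (c * gam)) by (field; lra).
    apply Rmult_lt_reg_r with (c * gam); [apply Rmult_lt_0_compat; auto|].
    replace (1 / (t ^ 2 * x n) / (c * gam) * (c * gam)) with (1 / (t ^ 2 * x n)) by (field; lra).
    lra.
Qed.

Lemma div_lower h d : (1 <= d)%nat -> INR h / INR d - 1 <= INR (h / d).
Proof.
  intros Hd. pose proof (Nat.div_mod h d ltac:(lia)). pose proof (Nat.mod_upper_bound h d ltac:(lia)).
  assert (h < d * (h / d + 1))%nat by lia. apply lt_INR in H1.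
  rewrite mult_INR, plus_INR in H1. simpl in H1.
  assert (0 < INR d) by (apply lt_0_INR; lia).
  apply (Rmult_le_reg_l (INR d)); auto.
  replace (INR d * (INR h / INR d - 1)) with (INR h - INR d) by (field; lra). nra.
Qed.

Lemma m_lower Kn : (1 <= Kn)%nat ->
  exists H0, forall h, (h >= H0)%nat ->
   / (64 * INR Kn ^ 2) * INR h ^ 2 <= INR (length (cop (h / (2 * Kn)))).
Proof.
  intros HK. exists (4 * Kn)%nat. intros h Hh.
  pose proof (cop_count (h / (2 * Kn))) as Hc.
  pose proof (div_lower h (2 * Kn) ltac:(lia)) as Hd.
  replace (INR (2 * Kn)) with (2 * INR Kn) in Hd by (rewrite mult_INR; simpl; ring).
  assert (HK0 : 1 <= INR Kn) by (apply (le_INR 1); lia).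
  assert (Hh4 : 4 * INR Kn <= INR h) by (replace 4 with (INR 4) by (simpl; lra); rewrite <- mult_INR; apply le_INR; lia).
  set (A := INR (h / (2 * Kn))) in *. set (k := INR Kn) in *. set (t := INR h) in *.
  assert (HA : t / (4 * k) <= A).
  { eapply Rle_trans; [|exact Hd].
    replace (t / (2 * k) - 1) with (t / (4 * k) + (t / (4 * k) - 1)) by (field; lra).
    assert (1 <= t / (4 * k)).
    { apply (Rmult_le_reg_l (4 * k)); [lra|]. replace (4 * k * (t / (4 * k))) with t by (field; lra). lra. }
    lra. }
  assert (0 <= t / (4 * k)) by (apply Rmult_le_pos; [lra|left; apply Rinv_0_lt_compat; lra]).
  assert (t / (4 * k) * (t / (4 * k)) <= A * A) by (apply Rmult_le_compat; lra).
  replace (/ (64 * k ^ 2) * t ^ 2) with (t / (4 * k) * (t / (4 * k)) / 4) by (field; lra).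
  lra.
Qed.

Lemma r_lower : exists H0, forall h, (h >= H0)%nat -> / 4 * INR h ^ 2 <= INR (length (cop h)).
Proof. exists 0%nat. intros h _. pose proof (cop_count h). simpl. lra. Qed.

Lemma succ_sq p : succ p inv_lin -> succ (fun h => p h * p h) inv_sq.
Proof.
  intros [[N1 HN1] Hcv]. split.
  - exists N1. intros n Hn. specialize (HN1 n Hn). intro E. apply HN1. nra.
  - apply (cv_ext_ev (fun n => (inv_lin n / p n) * (inv_lin n / p n)) _ (max N1 1)).
    + intros n Hn. specialize (HN1 n ltac:(lia)). pose proof (INR_pos_of n ltac:(lia)).
      unfold inv_lin, inv_sq. field. split; lra.
    + replace 0 with (0 * 0) by ring. apply CV_mult; auto.
Qed.

Open Scope R_scope.

Lemma sq_bound h : (h >= 1)%nat -> INR ((2 * h + 1) * (2 * h + 1)) <= 9 * INR h ^ 2.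
Proof.
  intros Hh. replace (9 * INR h ^ 2) with (INR (9 * (h * h))).
  - apply le_INR. nia.
  - rewrite !mult_INR. simpl. ring.
Qed.

Lemma q_over h x : (h >= 1)%nat -> x / inv_sq h = x * INR h ^ 2.
Proof.
  intros Hh. pose proof (INR_pos_of h Hh). unfold inv_sq. field. lra.
Qed.

Theorem theorem1 (q : nat -> R) (Hq : forall h, 0 <= q h <= 1) :
  ((prec q inv_sq \/ prec (fun h => 1 - q h) inv_sq) -> whp q smooth) /\
  ((succ q inv_sq /\ succ (fun h => 1 - q h) inv_sq) ->
      whp q (fun S => ~ smooth S)) /\
  (forall k : Z, (k > 1)%Z ->
      succ (fun h => 1 - q h) inv_lin -> succ q inv_sq ->
      whp q (has_sing_ge k)).
Proof.
  assert (Hp : forall h, 0 <= 1 - q h <= 1) by (intros h; specialize (Hq h); lra).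
  split; [|split].
  - intros [[_ Hc]|[_ Hc]].
    + apply (whp_bound q smooth (fun h => 9 * (q h / inv_sq h))); auto.
      * exists 1%nat. intros h Hh. rewrite q_over by auto.
        eapply Rle_trans; [|apply part1a; auto].
        pose proof (sq_bound h Hh). specialize (Hq h).
        replace (1 - (1 - q h)) with (q h) by ring. nra.
      * apply cv_scal; auto.
    + apply (whp_bound q smooth (fun h => 9 * ((1 - q h) / inv_sq h))); auto.
      * exists 1%nat. intros h Hh. rewrite q_over by auto.
        eapply Rle_trans; [|apply part1b; auto].
        pose proof (sq_bound h Hh). specialize (Hp h). nra.
      * apply cv_scal; auto.
  - intros [Hs1 Hs2].
    set (m := fun h => INR (length (cop (h / (2 * 3))))).
    set (r := fun h => INR (length (cop h))).
    apply (whp_bound q _ (fun h => 1 / (1 + m h * ((1 - (1 - q h)) / 4)) + 1 / (1 + m h * ((1 - q h) / 4))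
                        + 1 / (1 + r h * (1 - q h)))); auto.
    + exists 0%nat. intros h _. apply part2; auto.
    + destruct (m_lower 3 ltac:(lia)) as [H0 Hm].
      assert (Hc : 0 < / (64 * INR 3 ^ 2)) by (apply Rinv_0_lt_compat; simpl; lra).
      apply cv_plus; [apply cv_plus|].
      * apply (lim_inv q _ m _ (/ 4) Hc ltac:(lra) (fun h => proj1 (Hq h))).
        -- intros h. lra.
        -- exists H0; auto.
        -- auto.
      * apply (lim_inv (fun h => 1 - q h) _ m _ (/ 4) Hc ltac:(lra) (fun h => proj1 (Hp h))).
        -- intros h. lra.
        -- exists H0; auto.
        -- auto.
      * apply (lim_inv (fun h => 1 - q h) _ r (/ 4) 1 ltac:(lra) ltac:(lra) (fun h => proj1 (Hp h))).
        -- intros h. lra.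
        -- apply r_lower.
        -- auto.
  - intros k Hk Hlin Hs.
    set (m := fun h => INR (length (cop (h / (2 * (Z.to_nat k + 3)))))).
    apply (whp_bound q _ (fun h => 1 / (1 + m h * ((1 - (1 - q h)) / 4))
                        + 1 / (1 + m h * ((1 - q h) * (1 - q h) / 2)))); auto.
    + exists 0%nat. intros h _. apply part3; auto.
    + destruct (m_lower (Z.to_nat k + 3) ltac:(lia)) as [H0 Hm].
      assert (Hc : 0 < / (64 * INR (Z.to_nat k + 3) ^ 2)).
      { apply Rinv_0_lt_compat. assert (1 <= INR (Z.to_nat k + 3)) by (apply (le_INR 1); lia).
        nra. }
      apply cv_plus.
      * apply (lim_inv q _ m _ (/ 4) Hc ltac:(lra) (fun h => proj1 (Hq h))).
        -- intros h. lra.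
        -- exists H0; auto.
        -- auto.
      * apply (lim_inv (fun h => (1 - q h) * (1 - q h)) _ m _ (/ 2) Hc ltac:(lra)).
        -- intros h. specialize (Hp h). nra.
        -- intros h. lra.
        -- exists H0; auto.
        -- apply succ_sq; auto.
Qed.
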